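(* Let $f=\frac1{1-X}\in GF(2)[[X]]$, $\mu[f]:g\mapsto fg$, and let $\Gamma$ be the group of bijections of $GF(2)[[X]]$ generated by the maps $g\mapsto f\cdot(s+g)$, $s\in\{0,1\}$. Then the cyclic subgroup $\langle\mu[f]\rangle$ is not a normal subgroup of $\Gamma$.
   Context: Under the identification of $\{0,1\}^\omega$ with $GF(2)[[X]]$ via $(a_k)\mapsto\sum a_kX^k$, $\Gamma$ is the automaton group $\Gamma(\mathcal{M}_2)$ of the two-state Mealy machine over $\{0,1\}$ in which state $s$, reading $r$, outputs $s+r\bmod 2$ and moves to state $s+r\bmod 2$. *)

(* Defs.v *)
From Stdlib Require Import Bool Arith ZArith.

(* GF(2)[[X]] is represented by coefficient sequences: g k = coefficient of X^k. *)
Definition PS := nat -> bool.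

Definition ps_add (g h : PS) : PS := fun k => xorb (g k) (h k).

Definition ps_const (s : bool) : PS := fun k => match k with 0 => s | _ => false end.

Fixpoint xsum (n : nat) (F : nat -> bool) : bool :=
  match n with 0 => false | S n' => xorb (xsum n' F) (F n') end.
Definition ps_mul (g h : PS) : PS := fun k => xsum (S k) (fun i => andb (g i) (h (k - i))).

(* f = 1/(1-X) = sum_k X^k, and 1 - X = 1 + X over GF(2) *)
Definition f_ser : PS := fun _ => true.
Definition one_minus_X : PS := fun k => match k with 0 | 1 => true | _ => false end.

Definition mu (g : PS) : PS := ps_mul f_ser g.
Definition mu_inv (g : PS) : PS := ps_mul one_minus_X g.

Definition mu_pow (k : Z) : PS -> PS :=
  match k with
  | Z0 => fun g => g
  | Zpos p => Nat.iter (Pos.to_nat p) mu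
  | Zneg p => Nat.iter (Pos.to_nat p) mu_inv
  end.

Definition gen (s : bool) (g : PS) : PS := ps_mul f_ser (ps_add (ps_const s) g).
Definition gen_inv (s : bool) (g : PS) : PS := ps_add (mu_inv g) (ps_const s).

(* Gamma, the group of bijections generated by the gen s:
   in_Gamma h hi  means h is a finite product of the gen s and gen_inv s,
   and hi is the corresponding product of inverses (so hi = h^{-1}). *)
Inductive in_Gamma : (PS -> PS) -> (PS -> PS) -> Prop :=
| Gamma_id : in_Gamma (fun g => g) (fun g => g)
| Gamma_gen : forall s h hi, in_Gamma h hi ->
    in_Gamma (fun g => gen s (h g)) (fun g => hi (gen_inv s g))
| Gamma_gen_inv : forall s h hi, in_Gamma h hi ->
    in_Gamma (fun g => gen_inv s (h g)) (fun g => hi (gen s g)).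

Definition in_cyclic_mu (t : PS -> PS) : Prop :=
  exists m : Z, forall g, t g = mu_pow m g.

(* Main.v *)
Require Import Defs.
From Stdlib Require Import Bool Arith ZArith.

Lemma xsum_false n (F : nat -> bool) : (forall i, F i = false) -> xsum n F = false.
Proof. intros H; induction n as [|n IH]; simpl; [reflexivity|rewrite IH, H; reflexivity]. Qed.

Lemma mul_zero g k : ps_mul g (fun _ => false) k = false.
Proof. unfold ps_mul; apply xsum_false; intros i; apply andb_false_r. Qed.


Lemma iter_zero (F : PS -> PS) n :
  (forall g, (forall k, g k = false) -> forall k, F g k = false) ->
  forall k, Nat.iter n F (fun _ => false) k = false.
Proof.
  intros HF. induction n as [|n IH]; intros k; simpl; [reflexivity|].
  apply HF, IH.
Qed.

Lemma mul_zero' g h : (forall k, h k = false) -> forall k, ps_mul g h k = false.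
Proof. intros H k; unfold ps_mul; apply xsum_false; intros i; rewrite H; apply andb_false_r. Qed.

Lemma mu_pow_zero m k : mu_pow m (fun _ => false) k = false.
Proof.
  destruct m; simpl; [reflexivity| |]; apply iter_zero; intros; apply mul_zero'; assumption.
Qed.

Theorem proposition9p6 :
  exists (h hi : PS -> PS) (k : Z),
    in_Gamma h hi /\ ~ in_cyclic_mu (fun g => h (mu_pow k (hi g))).
Proof.
  exists (fun g => gen true g), (fun g => gen_inv true g), 1%Z. split.
  - exact (Gamma_gen true _ _ Gamma_id).
  - intros [m Hm]. specialize (Hm (fun _ => false)).
    apply (f_equal (fun p => p 1)) in Hm.
    rewrite mu_pow_zero in Hm. vm_compute in Hm. discriminate.
Qed.
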